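(* Algorithm $\mathsf{LA}$ is deterministic and uses $O(n)$ queries to $f$. On every instance $(f,V,B)$ it returns a set $S$ with $c(S)\le B$ and $$\mathrm{opt}\le 19\,f(S),$$ where $\mathrm{opt}=\max\{f(T):T\subseteq V,\ c(T)\le B\}$.
   Context: Setting: $V$ is a finite ground set of size $n$. $f:2^V\to\mathbb{R}_{\ge 0}$ is a non-negative submodular set function with $f(\emptyset)=0$. Each $e\in V$ has a cost $c(e)>0$, and $c(S)=\sum_{e\in S}c(e)$. $B>0$ is a budget, and $c(e)\le B$ for every $e\in V$. A query is one evaluation of $f$ on a set. The notation $f(e\mid S)=f(S\cup\{e\})-f(S)$ is used. Algorithm $\mathsf{LA}$ on $(f,V,B)$ runs as follows. 1. Set $V_1=\{e\in V: c(e)\le B/2\}$ and $X=Y=\emptyset$. Let $e_{\max}\in\arg\max_{e\in V}f(e)$. 2. Main loop: process each $e\in V_1$ once, in an arbitrary fixed order. Among the sets $Z\in\{X,Y\}$ satisfying $f(e\mid Z)/c(e)\ge f(Z)/B$, choose one maximizing $f(e\mid Z)/c(e)$, breaking ties arbitrarily. If such a $Z$ exists, add $e$ to $Z$. 3. After the loop, for $T\in\{X,Y\}$ let $T(j)$ denote the set of the last $j$ elements added to $T$. Let $X'$ be the set $X(j)$ of largest cost among those with $0\le j\le|X|$ and $c(X(j))\le B$. Define $Y'$ from $Y$ in the same way. 4. Return the set $S$ among $X'$, $Y'$ and $\{e_{\max}\}$ with the largest $f$ value. *)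

(* Defs.v *)
From mathcomp Require Import all_boot all_order all_algebra.
Set Implicit Arguments. Unset Strict Implicit. Unset Printing Implicit Defensive.
Import Order.TTheory GRing.Theory Num.Theory.
Local Open Scope ring_scope.

Section Defs.
Variables (R : realFieldType) (T : finType).

Definition nonneg_fun (f : {set T} -> R) := forall S, 0 <= f S.
Definition submodular (f : {set T} -> R) :=
  forall A B : {set T}, f (A :|: B) + f (A :&: B) <= f A + f B.

Definition cost (c : T -> R) (S : {set T}) : R := \sum_(x in S) c x.

Definition marg (f : {set T} -> R) (e : T) (S : {set T}) := f (e |: S) - f S.

(* The algorithm accesses f ONLY through [query f], which
   increments the counter by one per evaluation of f. *)
Definition QM (A : Type) := nat -> A * nat.
Definition qret {A} (a : A) : QM A := fun k => (a, k).
Definition qbind {A B} (m : QM A) (g : A -> QM B) : QM B :=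
  fun k => let (a, k') := m k in g a k'.
Definition query (f : {set T} -> R) (S : {set T}) : QM R := fun k => (f S, k.+1).

Fixpoint qfoldl {A B} (g : B -> A -> QM B) (b : B) (s : seq A) : QM B :=
  match s with
  | [::] => qret b
  | a :: s' => qbind (g b a) (fun b' => qfoldl g b' s')
  end.

Definition setof (s : seq T) : {set T} := [set x in s].

(* ---------- Algorithm LA ----------
   Parameters besides the instance (f, c, B):
   - ord : the arbitrary fixed processing order (an enumeration of V);
   - tb X Y e : tie-breaking rule in the main loop (true = choose X) used when
     both X and Y qualify with equal density;
   - tbm e e' : tie-breaking rule for the argmax e_max (true = replace the current
     maximiser e' by e when f(e) = f(e')).
   Sets X, Y are stored as sequences in order of addition, together with the
   cached values f(X), f(Y). *)

Record LAstate := mkLA { Xs : seq T; fX : R; Ys : seq T; fY : R }.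

Definition LA_step (f : {set T} -> R) (c : T -> R) (B : R)
  (tb : {set T} -> {set T} -> T -> bool) (st : LAstate) (e : T) : QM LAstate :=
  let X := setof (Xs st) in let Y := setof (Ys st) in
  qbind (query f (e |: X)) (fun fXe =>
  qbind (query f (e |: Y)) (fun fYe =>
  let gX := (fXe - fX st) / c e in
  let gY := (fYe - fY st) / c e in
  let okX := fX st / B <= gX in
  let okY := fY st / B <= gY in
  let addX := mkLA (rcons (Xs st) e) fXe (Ys st) (fY st) in
  let addY := mkLA (Xs st) (fX st) (rcons (Ys st) e) fYe in
  qret (if okX && okY then
          (if gY < gX then addX else if gX < gY then addY
           else if tb X Y e then addX else addY)
        else if okX then addX else if okY then addY else st))).

Definition emax_step (f : {set T} -> R) (tbm : T -> T -> bool)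
  (best : option (T * R)) (e : T) : QM (option (T * R)) :=
  qbind (query f [set e]) (fun fe =>
  qret (match best with
        | None => Some (e, fe)
        | Some (e', fe') =>
            if (fe' < fe) || ((fe == fe') && tbm e e') then Some (e, fe) else best
        end)).

Definition lastj (s : seq T) (j : nat) : {set T} := setof (drop (size s - j) s).

Definition trunc (c : T -> R) (B : R) (s : seq T) : {set T} :=
  (foldl (fun (acc : {set T}) j =>
            let S := lastj s j in
            if (cost c S <= B) && (cost c acc < cost c S) then S else acc)
         set0 (iota 0 (size s).+1)).

Definition LA (f : {set T} -> R) (c : T -> R) (B : R) (ord : seq T)
  (tb : {set T} -> {set T} -> T -> bool) (tbm : T -> T -> bool) : QM {set T} :=
  let V1 := [seq e <- ord | c e <= B / 2] in
  qbind (qfoldl (emax_step f tbm) None ord) (fun em =>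
  qbind (query f set0) (fun f0 =>
  qbind (qfoldl (LA_step f c B tb) (mkLA [::] f0 [::] f0) V1) (fun st =>
  let X' := trunc c B (Xs st) in
  let Y' := trunc c B (Ys st) in
  qbind (query f X') (fun fX' =>
  qbind (query f Y') (fun fY' =>
  let SXY := if fX' < fY' then Y' else X' in
  let fXY := if fX' < fY' then fY' else fX' in
  qret (match em with
        | None => SXY
        | Some (e, fe) => if fXY < fe then [set e] else SXY
        end)))))).

Definition LA_output f c B ord tb tbm : {set T} := (LA f c B ord tb tbm 0).1.
Definition LA_queries f c B ord tb tbm : nat := (LA f c B ord tb tbm 0).2.

End Defs.

(* Main.v *)
Require Import Defs.
From mathcomp Require Import all_boot all_order all_algebra.
From mathcomp Require Import ring lra zify.
Import Order.TTheory GRing.Theory Num.Theory.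
Local Open Scope ring_scope.
Set Implicit Arguments. Unset Strict Implicit. Unset Printing Implicit Defensive.

Section Gen.
Variables (R : realFieldType) (T : finType).
Implicit Types (s a b : seq T) (x e : T).

Lemma setof_nil : setof [::] = set0 :> {set T}.
Proof. by apply/setP => y; rewrite !inE. Qed.
Lemma setof_cons x s : setof (x :: s) = x |: setof s.
Proof. by apply/setP => y; rewrite !inE. Qed.
Lemma setof_rcons s x : setof (rcons s x) = x |: setof s.
Proof. by apply/setP => y; rewrite !inE mem_rcons inE. Qed.
Lemma setof_cat a b : setof (a ++ b) = setof a :|: setof b.
Proof. by apply/setP => y; rewrite !inE mem_cat. Qed.
Lemma in_setof x s : (x \in setof s) = (x \in s).
Proof. by rewrite inE. Qed.

Lemma cost_setof (c : T -> R) s : uniq s -> cost c (setof s) = \sum_(x <- s) c x.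
Proof.
move=> us; rewrite /cost big_uniq //; apply: eq_bigl => y; by rewrite inE.
Qed.

Variable f : {set T} -> R.
Hypothesis f_sub : submodular f.

Lemma dimret (A Bs : {set T}) e : A \subset Bs -> e \notin Bs -> marg f e Bs <= marg f e A.
Proof.
move=> sAB eB; rewrite /marg.
have := f_sub (e |: A) Bs.
have -> : e |: A :|: Bs = e |: Bs.
  by rewrite -setUA (setUidPr sAB).
have -> : (e |: A) :&: Bs = A.
  apply/setP => y; rewrite !inE; case: (y =P e) => [->|_] /=.
  - by rewrite (negbTE eB); case: (e \in A) (subsetP sAB e) => // /(_ isT); rewrite (negbTE eB).
  - by case yA: (y \in A) => //=; rewrite (subsetP sAB y yA).
move=> h; rewrite lerBlDr; lra.
Qed.
End Gen.

Section Chain.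
Variables (R : realFieldType) (T : finType).
Variables (f : {set T} -> R) (c : T -> R) (B : R).
Hypotheses (f_nn : nonneg_fun f) (f_sub : submodular f) (f0 : f set0 = 0)
  (c_pos : forall e, 0 < c e) (B_pos : 0 < B).
Implicit Types (s a b : seq T) (x e : T).

Definition dens s := forall a x b, s = a ++ x :: b ->
  f (setof a) / B <= marg f x (setof a) / c x.

Lemma dens_nil : dens [::].
Proof. by move=> [|??] ? ?. Qed.

Lemma dens_rcons s x : dens s -> f (setof s) / B <= marg f x (setof s) / c x ->
  dens (rcons s x).
Proof.
move=> ds hx a y b; case/lastP: b => [|b z].
  by rewrite cats1 => /rcons_inj [<- <-].
rewrite -rcons_cons -rcons_cat => /rcons_inj [E _]; exact: ds E.
Qed.

Lemma dens_catl s t : dens (s ++ t) -> dens s.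
Proof. by move=> d a x b E; apply: (d a x (b ++ t)); rewrite E -catA. Qed.

Lemma marg_ge0 (S : {set T}) m x : f S / B <= m / c x -> 0 <= m.
Proof.
move=> h; have h0 : 0 <= f S / B by rewrite divr_ge0 // ?f_nn // ltW.
have : 0 <= m / c x by apply: le_trans h.
by rewrite pmulr_lge0 // invr_gt0.
Qed.

Lemma dens_last s x : dens (rcons s x) -> dens s /\ 0 <= marg f x (setof s) /\
  f (setof s) / B <= marg f x (setof s) / c x.
Proof.
move=> d; have h : f (setof s) / B <= marg f x (setof s) / c x.
  by apply: (d s x [::]); rewrite cats1.
split; last by split => //; exact: marg_ge0 h.
by apply: (@dens_catl _ [:: x]); rewrite cats1.
Qed.

Lemma f_rcons s x : f (setof (rcons s x)) = f (setof s) + marg f x (setof s).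
Proof. by rewrite setof_rcons /marg addrC subrK. Qed.

Lemma dens_mono a b : dens (a ++ b) -> f (setof a) <= f (setof (a ++ b)).
Proof.
elim/last_ind: b => [|b x IH]; first by rewrite cats0.
rewrite -rcons_cat => /dens_last [d [h _]].
rewrite f_rcons; apply: le_trans (IH d) _; by rewrite lerDl.
Qed.

Lemma dens_chain a b : dens (a ++ b) -> uniq (a ++ b) ->
  (\sum_(x <- b) c x) * f (setof a) <= B * f (setof b).
Proof.
elim/last_ind: b => [|b x IH]; first by rewrite big_nil mul0r setof_nil f0 mulr0.
rewrite -rcons_cat => /dens_last [d [h0 h]] u.
have u' : uniq (a ++ b) by move: u; rewrite rcons_uniq => /andP [].
have xn : x \notin a ++ b by move: u; rewrite rcons_uniq => /andP [].
rewrite f_rcons -cats1 big_cat big_seq1 /= mulrDl mulrDr.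
apply: lerD; first exact: IH.
have m1 : marg f x (setof (a ++ b)) <= marg f x (setof b).
  apply: dimret => //; last by rewrite in_setof.
  by rewrite setof_cat subsetUr.
have m2 : c x * f (setof (a ++ b)) <= B * marg f x (setof (a ++ b)).
  move: h; rewrite ler_pdivrMr // mulrAC ler_pdivlMr //.
  by rewrite mulrC [B * _]mulrC.
have m3 := dens_mono d.
have cx := c_pos x.
apply: le_trans (_ : c x * f (setof (a ++ b)) <= _).
  by rewrite ler_pM2l.
apply: le_trans m2 _; by rewrite ler_pM2l.
Qed.

Lemma telescope s : uniq s ->
  \sum_(o <- s) marg f o (setof (take (index o s) s)) = f (setof s).
Proof.
elim/last_ind: s => [|s x IH]; first by rewrite big_nil setof_nil f0.
rewrite rcons_uniq => /andP [xs us].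
rewrite -cats1 big_cat big_seq1 /= cats1 f_rcons -IH //.
congr (_ + _).
  apply: eq_big_seq => o os; congr (marg f o (setof _)).
  rewrite -cats1 index_cat os take_cat; rewrite index_mem os //.
rewrite -cats1 index_cat (negbTE xs) /= eqxx addn0 take_cat ltnn subnn take0 cats0 //.
Qed.
End Chain.

Section Loop.
Variables (R : realFieldType) (T : finType).
Variables (f : {set T} -> R) (c : T -> R) (B : R).
Hypotheses (f_nn : nonneg_fun f) (f_sub : submodular f) (f0 : f set0 = 0)
  (c_pos : forall e, 0 < c e) (B_pos : 0 < B).
Implicit Types (s a b p xs ys : seq T) (x e : T).

Definition rej xs ys e := exists a b, xs = a ++ b /\
  (marg f e (setof a) / c e < f (setof a) / B \/
   exists ya yb, ys = ya ++ e :: yb /\ marg f e (setof a) <= marg f e (setof ya)).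

Record Inv p xs fx ys fy : Prop := MkInv {
  i_fx : fx = f (setof xs);
  i_fy : fy = f (setof ys);
  i_uniq : uniq (xs ++ ys);
  i_sub : {subset xs ++ ys <= p};
  i_dx : dens f c B xs;
  i_dy : dens f c B ys;
  i_rx : forall e, e \in p -> e \notin xs -> rej xs ys e;
  i_ry : forall e, e \in p -> e \notin ys -> rej ys xs e }.

Lemma rej_rcons_l xs ys e x : rej xs ys e -> rej (rcons xs x) ys e.
Proof. by case=> a [b [-> h]]; exists a, (rcons b x); rewrite rcons_cat. Qed.

Lemma rej_rcons_r xs ys e x : rej xs ys e -> rej xs (rcons ys x) e.
Proof.
case=> a [b [E [h|[ya [yb [E' h]]]]]]; exists a, b; split => //; first by left.
by right; exists ya, (rcons yb x); rewrite E' rcons_cat rcons_cons.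
Qed.

Lemma inv_sym p xs fx ys fy : Inv p xs fx ys fy -> Inv p ys fy xs fx.
Proof.
case=> *; constructor => //; first by rewrite uniq_catC.
by move=> y; rewrite mem_cat orbC -mem_cat; auto.
Qed.

Lemma inv_add p xs ys fy e : Inv p xs (f (setof xs)) ys fy -> e \notin p ->
  f (setof xs) / B <= marg f e (setof xs) / c e ->
  (f (setof ys) / B <= marg f e (setof ys) / c e ->
     marg f e (setof ys) / c e <= marg f e (setof xs) / c e) ->
  Inv (rcons p e) (rcons xs e) (f (e |: setof xs)) ys fy.
Proof.
case=> _ Hfy Hu Hs Hdx Hdy Hrx Hry ep okX cmp.
have exy : e \notin xs ++ ys by apply/negP => /Hs; rewrite (negbTE ep).
constructor => //.
- by rewrite setof_rcons.
- rewrite -cats1 -catA (perm_uniq (permEl (perm_catCA xs [:: e] ys))) /=.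
  by rewrite exy Hu.
- move=> y; rewrite cat_rcons mem_cat inE mem_rcons inE.
  case: (y =P e) => //= _; rewrite -mem_cat; exact: Hs.
- exact: dens_rcons.
- move=> y; rewrite mem_rcons inE mem_rcons inE; case: (y =P e) => //= _ yp yx.
  exact/rej_rcons_l/Hrx.
- move=> y; rewrite mem_rcons inE; case: (y =P e) => [-> _ _|_ /= yp yy].
  + exists ys, [::]; rewrite cats0; split => //.
    case: (leP (f (setof ys) / B) (marg f e (setof ys) / c e)) => [okY|nokY].
    * right; exists xs, [::]; rewrite cats1; split => //.
      by move: (cmp okY); rewrite ler_pM2r // invr_gt0.
    * by left.
  + exact/rej_rcons_r/Hry.
Qed.

Lemma inv_skip p xs fx ys fy e : Inv p xs fx ys fy -> e \notin p ->
  marg f e (setof xs) / c e < f (setof xs) / B ->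
  marg f e (setof ys) / c e < f (setof ys) / B ->
  Inv (rcons p e) xs fx ys fy.
Proof.
case=> Hfx Hfy Hu Hs Hdx Hdy Hrx Hry ep nX nY.
constructor => //.
- by move=> y /Hs; rewrite mem_rcons inE orbC => ->.
- move=> y; rewrite mem_rcons inE; case: (y =P e) => [-> _ _|_ /= yp yx].
  + by exists xs, [::]; rewrite cats0; split => //; left.
  + exact: Hrx.
- move=> y; rewrite mem_rcons inE; case: (y =P e) => [-> _ _|_ /= yp yx].
  + by exists ys, [::]; rewrite cats0; split => //; left.
  + exact: Hry.
Qed.

Variable tb : {set T} -> {set T} -> T -> bool.

Lemma step_inv p st e : Inv p (Xs st) (fX st) (Ys st) (fY st) -> e \notin p ->
  let st' := (LA_step f c B tb st e 0).1 in
  Inv (rcons p e) (Xs st') (fX st') (Ys st') (fY st').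
Proof.
case: st => xs fx ys fy /= I ep.
have Hfx := i_fx I; have Hfy := i_fy I.
subst fx fy; rewrite /LA_step /qbind /query /qret /=.
set gX := (f (e |: setof xs) - f (setof xs)) / c e.
set gY := (f (e |: setof ys) - f (setof ys)) / c e.
have addX : f (setof xs) / B <= gX -> (f (setof ys) / B <= gY -> gY <= gX) ->
   Inv (rcons p e) (rcons xs e) (f (e |: setof xs)) ys (f (setof ys)).
  by move=> h1 h2; apply: inv_add.
have addY : f (setof ys) / B <= gY -> (f (setof xs) / B <= gX -> gX <= gY) ->
   Inv (rcons p e) xs (f (setof xs)) (rcons ys e) (f (e |: setof ys)).
  by move=> h1 h2; apply: inv_sym; apply: inv_add => //; apply: inv_sym.
case okX: (f (setof xs) / B <= gX); case okY: (f (setof ys) / B <= gY) => /=.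
- case: ltgtP => [lt|lt|eq].
  + by apply: addX => // _; apply: ltW.
  + by apply: addY => // _; apply: ltW.
  + by case: (tb _ _ _); [apply: addX | apply: addY] => // _; rewrite eq.
- by apply: addX => //; rewrite okY.
- by apply: addY => //; rewrite okX.
- apply: inv_skip => //; rewrite ltNge; apply/negP => h.
  + by move: okX; rewrite /gX h.
  + by move: okY; rewrite /gY h.
Qed.
End Loop.

Lemma qfoldl_pure (A B : Type) (g : B -> A -> QM B) n :
  (forall b a k, g b a k = ((g b a 0).1, (k + n)%N)) ->
  forall s b k, qfoldl g b s k = (foldl (fun b a => (g b a 0).1) b s, (k + n * size s)%N).
Proof.
move=> hg; elim=> [|a s IH] b k /=; first by rewrite /qret muln0 addn0.
by rewrite /qbind hg IH mulnS addnA.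
Qed.

Lemma foldl_inv (A : eqType) (B : Type) (h : B -> A -> B) (I : seq A -> B -> Prop)
  (P : pred A) :
  (forall p b a, I p b -> P a -> a \notin p -> I (rcons p a) (h b a)) ->
  forall s p b, uniq (p ++ s) -> all P s -> I p b -> I (p ++ s) (foldl h b s).
Proof.
move=> H; elim=> [|a s IH] p b; first by rewrite cats0.
move=> u /andP [Pa As] Ip /=; rewrite -cat_rcons; apply: IH => //.
  by rewrite cat_rcons.
apply: H => //; move: u; rewrite -cat1s catA cat_uniq => /and3P [].
by rewrite cats1 rcons_uniq => /andP [].
Qed.

Section Final.
Variables (R : realFieldType) (T : finType).
Variables (f : {set T} -> R) (c : T -> R) (B : R).
Hypotheses (f_nn : nonneg_fun f) (f_sub : submodular f) (f0 : f set0 = 0)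
  (c_pos : forall e, 0 < c e) (B_pos : 0 < B).
Implicit Types (s a b p xs ys : seq T) (x e : T).

Lemma L2 (A : {set T}) s : uniq s ->
  f (A :|: setof s) <= f A + \sum_(o <- s | o \notin A) marg f o A.
Proof.
elim: s => [|x s IH]; first by rewrite setof_nil setU0 big_nil addr0.
rewrite cons_uniq => /andP [xs us]; rewrite big_cons setof_cons.
case: ifP => xA; last first.
  have -> : A :|: (x |: setof s) = A :|: setof s.
    by rewrite setUCA (setUidPr _) // sub1set inE (negbNE (negbT xA)).
  exact: IH.
have -> : f (A :|: (x |: setof s)) = f (A :|: setof s) + marg f x (A :|: setof s).
  by rewrite /marg setUCA addrC subrK.
have : marg f x (A :|: setof s) <= marg f x A.
  apply: dimret => //; first exact: subsetUl.
  by rewrite inE in_setof negb_or xA.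
move: (IH us); lra.
Qed.

Lemma uniq_pivot (p1 p2 : seq T) o : uniq (p1 ++ o :: p2) -> o \notin p1.
Proof. by rewrite -cat1s catA cat_uniq cats1 rcons_uniq => /and3P [/andP []]. Qed.

Definition gY ys o := if o \in ys then marg f o (setof (take (index o ys) ys)) else 0.

Lemma gY_ge0 ys o : dens f c B ys -> uniq ys -> 0 <= gY ys o.
Proof.
rewrite /gY; case: ifP => // oy d u.
case/splitPr: oy d u => p1 p2 d u.
have op1 := uniq_pivot u.
rewrite take_pivot //; exact: marg_ge0 (d p1 o p2 erefl).
Qed.

Lemma sum_gY ys : uniq ys -> \sum_(o : T) gY ys o = f (setof ys).
Proof.
move=> u; rewrite -(telescope f0 u); apply: esym; rewrite big_uniq // big_mkcond /=.
by apply: eq_bigr => o _; rewrite /gY.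
Qed.

Definition hK o := if c o <= B / 2 then c o else 0.
Definition hM o : R := if c o <= B / 2 then 0 else 1.

Lemma half_bound p xs fx ys fy (O : {set T}) fS : 0 <= fS ->
  Inv f c B p xs fx ys fy -> (forall x, c x <= B / 2 -> x \in p) ->
  (forall x, f [set x] <= fS) ->
  f (setof xs :|: O) <= f (setof xs) + (\sum_(o <- enum O) hK o) / B * f (setof xs)
      + (\sum_(o <- enum O) hM o) * fS + f (setof ys).
Proof.
move=> fS0 I Hp Hs.
have dx := i_dx I; have dy := i_dy I.
have ux : uniq xs by move: (i_uniq I); rewrite cat_uniq => /and3P [].
have uy : uniq ys by move: (i_uniq I); rewrite cat_uniq => /and3P [].
have fX0 : 0 <= f (setof xs) by apply: f_nn.
have eO : setof (enum O) = O by apply/setP => z; rewrite in_setof mem_enum.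
have := L2 (setof xs) (enum_uniq (mem O)); rewrite eO => h1.
apply: le_trans h1 _.
rewrite -!addrA lerD2l.
set X := setof xs.
have pt : forall o, o \notin X ->
    marg f o X <= (hK o / B * f X + hM o * fS) + gY ys o.
  move=> o oX; have g0 := gY_ge0 o dy uy.
  rewrite /hK /hM; case: ifP => co.
  - rewrite mul0r addr0.
    have op : o \in p by apply: Hp.
    have ox : o \notin xs by rewrite -in_setof.
    case: (i_rx I op ox) => a [b [E [lt|[ya [yb [E' le]]]]]].
    + have m1 : marg f o X <= marg f o (setof a).
        apply: dimret => //; rewrite /X E setof_cat; exact: subsetUl.
      have m2 : f (setof a) <= f X by rewrite /X E; apply: (dens_mono f_nn c_pos B_pos); rewrite -E.
      have cp := c_pos o.
      move: lt; rewrite ltr_pdivrMr // mulrAC ltr_pdivlMr // => lt.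
      have : marg f o (setof a) * B <= c o * f X.
        apply: le_trans (ltW lt) _; rewrite mulrC ler_pM2l //.
      rewrite -ler_pdivlMr // => h.
      apply: le_trans m1 _; apply: le_trans h _.
      rewrite mulrAC; lra.
    + have m1 : marg f o X <= marg f o (setof a).
        apply: dimret => //; rewrite /X E setof_cat; exact: subsetUl.
      have oy : o \in ys by rewrite E' mem_cat inE eqxx orbT.
      have oya : o \notin ya by apply: (@uniq_pivot _ yb); rewrite -E'.
      have : gY ys o = marg f o (setof ya) by rewrite /gY oy E' take_pivot.
      have : 0 <= c o / B * f X by rewrite mulr_ge0 // divr_ge0 // ltW.
      lra.
  - rewrite !mul0r add0r mul1r.
    have : marg f o X <= marg f o set0 by apply: dimret => //; exact: sub0set.
    rewrite /marg setU0 f0 subr0 => h.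
    move: (Hs o); lra.
apply: le_trans (_ : \sum_(o <- enum O | o \notin X) ((hK o / B * f X + hM o * fS) + gY ys o) <= _).
  by apply: ler_sum => o; apply: pt.
rewrite big_mkcond /=.
apply: le_trans (_ : \sum_(o <- enum O) ((hK o / B * f X + hM o * fS) + gY ys o) <= _).
  apply: ler_sum => o _; case: ifP => // _.
  have : 0 <= hK o by rewrite /hK; case: ifP => // _; apply: ltW.
  have : 0 <= hM o by rewrite /hM; case: ifP.
  move=> h1 h2; have := gY_ge0 o dy uy.
  have : 0 <= hK o / B * f X by rewrite mulr_ge0 // divr_ge0 // ltW.
  have : 0 <= hM o * fS by rewrite mulr_ge0.
  lra.
rewrite big_split big_split /= -!mulr_suml addrA lerD2l.
rewrite -(sum_gY uy) big_enum /= big_mkcond /=.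
apply: ler_sum => o _; case: ifP => // _; exact: gY_ge0.
Qed.
End Final.

Section Bounds.
Variables (R : realFieldType) (T : finType).
Variables (f : {set T} -> R) (c : T -> R) (B : R).
Hypotheses (f_nn : nonneg_fun f) (f_sub : submodular f) (f0 : f set0 = 0)
  (c_pos : forall e, 0 < c e) (B_pos : 0 < B).

Lemma final_bound p xs fx ys fy (O : {set T}) fS : 0 <= fS ->
  Inv f c B p xs fx ys fy -> (forall x, c x <= B / 2 -> x \in p) ->
  (forall x, f [set x] <= fS) -> cost c O <= B ->
  f (setof xs) <= 3%:R * fS -> f (setof ys) <= 3%:R * fS -> f O <= 19%:R * fS.
Proof.
move=> fS0 I Hp Hs cO hx hy.
have hX := half_bound f_nn f_sub f0 c_pos B_pos O fS0 I Hp Hs.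
have hY := half_bound f_nn f_sub f0 c_pos B_pos O fS0 (inv_sym I) Hp Hs.
set K := \sum_(o <- enum O) hK c B o in hX hY.
set M := \sum_(o <- enum O) hM c B o in hX hY.
have disj : forall z, z \in xs -> z \notin ys.
  move=> z zx; move: (i_uniq I); rewrite cat_uniq => /and3P [_ /hasPn h _].
  by apply/negP => zy; move: (h z zy); rewrite zx.
have hU : f O <= f (setof xs :|: O) + f (setof ys :|: O).
  have := f_sub (setof xs :|: O) (setof ys :|: O).
  have -> : (setof xs :|: O) :&: (setof ys :|: O) = O.
    apply/setP => z; rewrite !inE.
    case zO: (z \in O); first by rewrite !orbT.
    rewrite !orbF; case zx: (z \in xs) => //=; by rewrite (negbTE (disj z zx)).
  have := f_nn (setof xs :|: O :|: (setof ys :|: O)); lra.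
have K0 : 0 <= K by apply: sumr_ge0 => o _; rewrite /hK; case: ifP => // _; apply: ltW.
have M0 : 0 <= M by apply: sumr_ge0 => o _; rewrite /hM; case: ifP.
have KM : K + M * (B / 2) <= B.
  apply: le_trans cO; rewrite /cost -big_enum /= mulr_suml -big_split /=.
  apply: ler_sum => o _; rewrite /hK /hM; case: ifP => co.
    by rewrite mul0r addr0.
  by rewrite mul1r add0r; apply: ltW; rewrite ltNge co.
set k := K / B in hX hY.
have k0 : 0 <= k by rewrite divr_ge0 // ltW.
have kM : k + M / 2 <= 1.
  rewrite -(ler_pM2r B_pos) mul1r mulrDl /k divfK ?gt_eqF //.
  by rewrite mulrAC -mulrA.
have fX0 := f_nn (setof xs); have fY0 := f_nn (setof ys).
have t1 : k * (f (setof xs) + f (setof ys)) <= k * (6%:R * fS).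
  by rewrite ler_wpM2l //; lra.
have t2 : (6%:R * k + 2%:R * M) * fS <= 6%:R * fS.
  rewrite ler_wpM2r //; lra.
move: hU hX hY t1 t2; rewrite !mulrDr !mulrDl; lra.
Qed.

Lemma trunc_bound xs : dens f c B xs -> uniq xs ->
  (forall x, x \in xs -> c x <= B / 2) ->
  cost c (trunc c B xs) <= B /\ f (setof xs) <= 3%:R * f (trunc c B xs).
Proof.
move=> dx ux cx.
pose I := fun (js : seq nat) (acc : {set T}) =>
  [/\ exists2 j, (j <= size xs)%N & acc = lastj xs j, cost c acc <= B &
      forall j, j \in js -> cost c (lastj xs j) <= B -> cost c (lastj xs j) <= cost c acc].
have HI : I (iota 0 (size xs).+1) (trunc c B xs).
  rewrite /trunc -[iota _ _]cat0s.
  apply: (@foldl_inv _ _ _ I (fun j => (j <= size xs)%N)).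
  - move=> js acc a [[j hj ->] hc hm] ha _ /=.
    case: ifP => [/andP [h1 h2]|hn].
    + split => //; first by exists a.
      move=> j'; rewrite mem_rcons inE => /orP [/eqP -> //|/hm h /h h'].
      exact: le_trans h' (ltW h2).
    + split => //; first by exists j.
      move=> j'; rewrite mem_rcons inE => /orP [/eqP -> h|/hm //].
      by move: hn; rewrite h /= => /negbT; rewrite -leNgt.
  - by rewrite cat0s iota_uniq.
  - by apply/allP => j; rewrite mem_iota add0n ltnS.
  - have l0 : lastj xs 0 = set0 by rewrite /lastj subn0 drop_size setof_nil.
    split => //; first by exists 0%N; rewrite ?l0.
    by rewrite /cost big_set0 ltW.
case: HI => [[j hj E] hc hm]; split => //.
move: E; rewrite /lastj; set i := (size xs - j)%N => E; rewrite E; rewrite E in hm.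
have Exs : xs = take i xs ++ drop i xs by rewrite cat_take_drop.
set a := take i xs in Exs; set b := drop i xs in Exs E *.
have hab : f (setof xs) <= f (setof a) + f (setof b).
  have := f_sub (setof a) (setof b); rewrite -setof_cat -Exs.
  have := f_nn (setof a :&: setof b); lra.
suff : f (setof a) <= 2%:R * f (setof b) by move: hab; lra.
have fb0 := f_nn (setof b); have fa0 := f_nn (setof a).
have ch : (\sum_(x <- b) c x) * f (setof a) <= B * f (setof b).
  by apply: (dens_chain f_nn f_sub f0 c_pos B_pos); rewrite -Exs.
have ub : uniq b by move: ux; rewrite Exs cat_uniq => /and3P [].
case: (ltnP j (size xs)) => hj'; last first.
  have i0 : i = 0%N by rewrite /i; lia.
  by move: fa0; rewrite /a i0 take0 setof_nil f0; lra.
have ipos : (0 < i)%N by rewrite /i; lia.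
have sa : size a = i by rewrite /a size_takel // /i leq_subr.
have [a' [x Ea]] : exists a' x, a = rcons a' x.
  move: sa; rewrite /a; case/lastP: (take i xs) => [|a' x] /=.
    by move=> h; move: ipos; rewrite -h.
  by exists a', x.
rewrite Ea in Exs sa ch fa0 *.
move: Exs sa; rewrite size_rcons cat_rcons => Exs sa.
have hl : lastj xs j.+1 = setof (x :: b).
  rewrite /lastj {2}Exs drop_size_cat //.
  by rewrite /i in sa; rewrite Exs size_cat /= in sa *; lia.
have ux' : uniq (x :: b) by move: ux; rewrite Exs cat_uniq => /and3P [].
have cxb : B < \sum_(y <- x :: b) c y.
  rewrite ltNge; apply/negP => h.
  have := hm j.+1; rewrite mem_iota add0n ltnS hj' hl cost_setof // => /(_ isT h).
  rewrite cost_setof // big_cons; have := c_pos x; lra.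
have cxB : c x <= B / 2 by apply: cx; rewrite Exs mem_cat inE eqxx orbT.
move: cxb; rewrite big_cons => cxb.
have hb : B / 2 * f (setof (rcons a' x)) <= (\sum_(y <- b) c y) * f (setof (rcons a' x)).
  by apply: ler_wpM2r => //; lra.
have : B * (f (setof (rcons a' x)) / 2) <= B * f (setof b).
  by rewrite mulrCA mulrC; apply: le_trans hb ch.
rewrite ler_pM2l //; lra.
Qed.

Lemma emax_spec tbm s : uniq s ->
  match foldl (fun b a => (emax_step f tbm b a 0).1) None s with
  | None => s = [::]
  | Some (e, fe) => fe = f [set e] /\ forall x, x \in s -> f [set x] <= fe
  end.
Proof.
move=> us.
pose I := fun (p : seq T) (best : option (T * R)) =>
  match best with
  | None => p = [::]
  | Some (e, fe) => fe = f [set e] /\ forall x, x \in p -> f [set x] <= fe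
  end.
rewrite -[s]cat0s.
apply: (@foldl_inv _ _ _ I predT) => //; last by apply/allP.
move=> p [[e fe]|] a /= Ip _ _; rewrite /I.
- case: Ip => -> hp; case: ifP => [/orP h|/negbT].
  + split => // x; rewrite mem_rcons inE => /orP [/eqP -> //|/hp hx].
    apply: le_trans hx _; case: h => [/ltW //|/andP [/eqP -> _] //].
  + rewrite negb_or => /andP [h _]; split => // x.
    rewrite mem_rcons inE => /orP [/eqP ->|/hp //].
    by rewrite leNgt.
- by rewrite Ip; split => // x; rewrite inE => /eqP ->.
Qed.
End Bounds.

Section Main.
Variables (R : realFieldType) (T : finType).
Variables (f : {set T} -> R) (c : T -> R) (B : R) (ord : seq T)
  (tb : {set T} -> {set T} -> T -> bool) (tbm : T -> T -> bool).
Hypotheses (f_nn : nonneg_fun f) (f_sub : submodular f) (f0 : f set0 = 0)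
  (c_pos : forall e, 0 < c e) (B_pos : 0 < B) (cB : forall e, c e <= B)
  (pord : perm_eq ord (enum T)).

Lemma emax_eq b a k : emax_step f tbm b a k = ((emax_step f tbm b a 0).1, (k + 1)%N).
Proof. by rewrite addn1. Qed.
Lemma step_eq b a k : LA_step f c B tb b a k = ((LA_step f c B tb b a 0).1, (k + 2)%N).
Proof. by rewrite addn2. Qed.

Lemma LA_main :
    [/\ (LA_queries f c B ord tb tbm <= 3 * #|T| + 3)%N,
        cost c (LA_output f c B ord tb tbm) <= B &
        forall T' : {set T}, cost c T' <= B ->
          f T' <= 19%:R * f (LA_output f c B ord tb tbm)].
Proof.
have uo : uniq ord by rewrite (perm_uniq pord) enum_uniq.
have allo : forall x, x \in ord by move=> x; rewrite (perm_mem pord) mem_enum.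
have so : size ord = #|T| by rewrite (perm_size pord) cardE.
set V1 := [seq e <- ord | c e <= B / 2].
have sV : (size V1 <= size ord)%N by rewrite size_filter count_size.
have inV : forall x, (x \in V1) = (c x <= B / 2) by move=> x; rewrite mem_filter allo andbT.
rewrite /LA_output /LA_queries /LA /qbind /query /qret (qfoldl_pure emax_eq).
set EM := foldl _ None ord.
cbv beta iota.
rewrite (qfoldl_pure step_eq).
set ST := foldl _ _ _.
cbv beta iota delta [fst snd].
have hEM := emax_spec f tbm uo; rewrite -/EM in hEM.
have HI : Inv f c B V1 (Xs ST) (fX ST) (Ys ST) (fY ST).
  rewrite /ST -[V1]cat0s.
  apply: (@foldl_inv _ _ _ (fun p st => Inv f c B p (Xs st) (fX st) (Ys st) (fY st)) predT).
  - move=> p st a Ip _ ap; exact: step_inv.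
  - by rewrite cat0s filter_uniq.
  - by apply/allP.
  - constructor => //=; rewrite ?setof_nil //; try exact: dens_nil.
clearbody EM ST.
have ux : uniq (Xs ST) by move: (i_uniq HI); rewrite cat_uniq => /and3P [].
have uy : uniq (Ys ST) by move: (i_uniq HI); rewrite cat_uniq => /and3P [].
have cxs : forall x, x \in Xs ST -> c x <= B / 2.
  by move=> x hx; rewrite -inV; apply: (i_sub HI); rewrite mem_cat hx.
have cys : forall x, x \in Ys ST -> c x <= B / 2.
  by move=> x hx; rewrite -inV; apply: (i_sub HI); rewrite mem_cat hx orbT.
have [tx1 tx2] := trunc_bound f_nn f_sub f0 c_pos B_pos (i_dx HI) ux cxs.
have [ty1 ty2] := trunc_bound f_nn f_sub f0 c_pos B_pos (i_dy HI) uy cys.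
set X' := trunc c B (Xs ST) in tx1 tx2 *.
set Y' := trunc c B (Ys ST) in ty1 ty2 *.
have key : forall S : {set T}, f X' <= f S -> f Y' <= f S ->
    (forall x, f [set x] <= f S) ->
    forall T' : {set T}, cost c T' <= B -> f T' <= 19%:R * f S.
  move=> S h1 h2 h3 O cO.
  apply: (final_bound f_nn f_sub f0 c_pos B_pos (f_nn S) HI) => //.
  - by move=> x; rewrite inV.
  - by apply: le_trans tx2 _; rewrite ler_pM2l.
  - by apply: le_trans ty2 _; rewrite ler_pM2l.
split.
- rewrite -so; move: sV; rewrite /V1; case: EM hEM => [[??]|] _; lia.
- case: EM hEM => [[e fe] _|_]; case: ifP => // _; try case: ifP => // _.
  by rewrite /cost big_set1.
- have fXYe : (if f X' < f Y' then f Y' else f X') = f (if f X' < f Y' then Y' else X').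
    by case: ifP.
  rewrite fXYe; set SXY := if f X' < f Y' then Y' else X'.
  have [m1 m2] : f X' <= f SXY /\ f Y' <= f SXY.
    by rewrite /SXY; case: ifP => h; split => //; [exact: ltW | rewrite leNgt h].
  case: EM hEM => [[e fe]|hnil] /=; last first.
    apply: key => // x; by move: (allo x); rewrite hnil.
  move=> [-> hmax].
  have hm : forall x, f [set x] <= f [set e] by move=> x; apply: hmax.
  case: ifP => h1.
  + apply: key => //; [apply: le_trans m1 (ltW h1) | apply: le_trans m2 (ltW h1)].
  + have h1' : f [set e] <= f SXY by rewrite leNgt h1.
    apply: key => // x; exact: le_trans (hm x) h1'.
Qed.
End Main.

Theorem theorem1 :
  exists C : nat,
  forall (R : realFieldType) (T : finType) (f : {set T} -> R) (c : T -> R) (B : R)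
         (ord : seq T) (tb : {set T} -> {set T} -> T -> bool) (tbm : T -> T -> bool),
    nonneg_fun f -> submodular f -> f set0 = 0 ->
    (forall e, 0 < c e) -> 0 < B -> (forall e, c e <= B) ->
    perm_eq ord (enum T) ->
    let S := LA_output f c B ord tb tbm in
    [/\ (LA_queries f c B ord tb tbm <= C * #|T| + C)%N,
        cost c S <= B &
        forall T' : {set T}, cost c T' <= B -> f T' <= 19%:R * f S].
Proof.
exists 3%N => R T f c B ord tb tbm h1 h2 h3 h4 h5 h6 h7 /=.
exact: LA_main.
Qed.
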